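(* Let $n\ge d\ge 1$ and let $(A,C)$ be a strict nondegenerate HOON pair, with $A$ real $n\times n$ and $C$ real $d\times n$. If $(\tilde A,\tilde C)$ is a strict HOON pair that is equivalent to $(A,C)$, then $\tilde A=A$ and $\tilde C=C$.
   Context: $(A,C)$ is a HOON pair if $A$ is upper Hessenberg ($A_{i,j}=0$ for $i>j+1$), $C_{1,j}=0$ for $j>1$, and $A^{*}A=\mathbb{I}_n-C^{*}C$ (${}^*$ = transpose). It is nondegenerate if $|C_{1,1}|<1$, unreduced if $A_{i+1,i}\neq 0$ for $1\le i<n$ and $C_{1,1}\ne 0$, standard if $A_{i+1,i}\ge 0$ for $1\le i<n$ and $0\le C_{1,1}<1$, and strict if it is unreduced and standard. Two pairs are equivalent if $\tilde A=T^{-1}AT$ and $\tilde C=CT$ for some invertible real matrix $T$. *)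

(* Defs.v *)
From HB Require Import structures.
From mathcomp Require Import all_boot all_order all_algebra.
From mathcomp Require Import reals.
Set Implicit Arguments. Unset Strict Implicit. Unset Printing Implicit Defensive.
Import Order.TTheory GRing.Theory Num.Theory.
Local Open Scope ring_scope.

(* Indices are 0-based: paper's entry (i,j) is A i' j' with i = i'+1, j = j'+1. *)

Definition HOON (R : realType) (n d : nat) (A : 'M[R]_n) (C : 'M[R]_(d, n)) : Prop :=
  (forall i j : 'I_n, (j.+1 < i)%N -> A i j = 0) /\
  (forall (i : 'I_d) (j : 'I_n), val i = 0%N -> (0 < j)%N -> C i j = 0) /\
  A^T *m A = 1%:M - C^T *m C.

Definition HOON_nondegenerate (R : realType) (n d : nat) (A : 'M[R]_n) (C : 'M[R]_(d, n)) : Prop :=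
  forall (i : 'I_d) (j : 'I_n), val i = 0%N -> val j = 0%N -> `|C i j| < 1.

Definition HOON_unreduced (R : realType) (n d : nat) (A : 'M[R]_n) (C : 'M[R]_(d, n)) : Prop :=
  (forall i j : 'I_n, val i = (val j).+1 -> A i j != 0) /\
  (forall (i : 'I_d) (j : 'I_n), val i = 0%N -> val j = 0%N -> C i j != 0).

Definition HOON_standard (R : realType) (n d : nat) (A : 'M[R]_n) (C : 'M[R]_(d, n)) : Prop :=
  (forall i j : 'I_n, val i = (val j).+1 -> 0 <= A i j) /\
  (forall (i : 'I_d) (j : 'I_n), val i = 0%N -> val j = 0%N -> 0 <= C i j < 1).

Definition HOON_strict (R : realType) (n d : nat) (A : 'M[R]_n) (C : 'M[R]_(d, n)) : Prop :=
  HOON_unreduced A C /\ HOON_standard A C.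

Definition HOON_equiv (R : realType) (n d : nat) (A : 'M[R]_n) (C : 'M[R]_(d, n))
    (At : 'M[R]_n) (Ct : 'M[R]_(d, n)) : Prop :=
  exists T : 'M[R]_n, T \in unitmx /\ At = invmx T *m A *m T /\ Ct = C *m T.

(* Main.v *)
Require Import Defs.
From HB Require Import structures.
From mathcomp Require Import all_boot all_order all_algebra.
From mathcomp Require Import reals.
From mathcomp Require Import ring lra.
Set Implicit Arguments. Unset Strict Implicit. Unset Printing Implicit Defensive.
Import Order.TTheory GRing.Theory Num.Theory.
Local Open Scope ring_scope.

Definition sq (R : realType) (m : nat) (v : 'cV[R]_m) : R := \sum_i (v i 0) ^+ 2.

Lemma sqE (R : realType) (m : nat) (v : 'cV[R]_m) : sq v = (v^T *m v) 0 0.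
Proof. by rewrite mxE; apply: eq_bigr => i _; rewrite !mxE expr2. Qed.

Lemma sq_ge0 (R : realType) (m : nat) (v : 'cV[R]_m) : 0 <= sq v.
Proof. by apply: sumr_ge0 => i _; rewrite sqr_ge0. Qed.

Lemma sq_eq0 (R : realType) (m : nat) (v : 'cV[R]_m) : sq v = 0 -> v = 0.
Proof.
move=> /eqP; rewrite psumr_eq0 => [/allP H|i _]; last by rewrite sqr_ge0.
apply/matrixP => i j; rewrite (ord1 j) mxE.
by have /(_ (mem_index_enum i)) := H i; rewrite /= sqrf_eq0 => /eqP.
Qed.

Lemma sq_entry (R : realType) (m : nat) (v : 'cV[R]_m) i : (v i 0) ^+ 2 <= sq v.
Proof.
rewrite /sq (bigD1 i) //= lerDl; apply: sumr_ge0 => k _; exact: sqr_ge0.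
Qed.

Lemma HOON_sq (R : realType) (n d : nat) (A : 'M[R]_n) (C : 'M[R]_(d, n)) v :
  HOON A C -> sq v = sq (C *m v) + sq (A *m v).
Proof.
move=> [_ [_ H]].
have E : 1%:M = A^T *m A + C^T *m C by rewrite H subrK.
rewrite !sqE.
have -> : v^T *m v = v^T *m (A^T *m A + C^T *m C) *m v by rewrite -E mulmx1.
by rewrite mulmxDr mulmxDl !trmx_mul !mulmxA [LHS]mxE addrC.
Qed.

Lemma exprSmx (R : realType) (n : nat) (A : 'M[R]_n) k (v : 'cV[R]_n) :
  A ^+ k.+1 *m v = A *m (A ^+ k *m v).
Proof. by rewrite exprS -mulmxE mulmxA. Qed.

Lemma expr0mx (R : realType) (n : nat) (A : 'M[R]_n) (v : 'cV[R]_n) :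
  A ^+ 0 *m v = v.
Proof. by rewrite expr0 -idmxE mul1mx. Qed.

Lemma HOON_iter (R : realType) (n d : nat) (A : 'M[R]_n) (C : 'M[R]_(d, n)) :
  HOON A C -> forall N v,
  sq v = \sum_(k < N) sq (C *m (A ^+ k *m v)) + sq (A ^+ N *m v).
Proof.
move=> H; elim=> [|N IH] v; first by rewrite big_ord0 add0r expr0mx.
rewrite big_ord_recr /= IH -addrA; congr (_ + _).
by rewrite (HOON_sq _ H) exprSmx.
Qed.

Lemma HOON_mono (R : realType) (n d : nat) (A : 'M[R]_n) (C : 'M[R]_(d, n)) :
  HOON A C -> forall N M v, (N <= M)%N -> sq (A ^+ M *m v) <= sq (A ^+ N *m v).
Proof.
move=> H N M v /subnK <-; elim: (M - N)%N => [|k IH]; first by rewrite add0n.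
apply: le_trans IH; rewrite addSn exprSmx [X in _ <= X](HOON_sq _ H) lerDr.
exact: sq_ge0.
Qed.

Lemma conj_expr (R : realType) (n : nat) (A T : 'M[R]_n) k :
  T \in unitmx -> (invmx T *m A *m T) ^+ k = invmx T *m A ^+ k *m T.
Proof.
move=> HT; elim: k => [|k IH]; first by rewrite !expr0 -idmxE mulmx1 mulVmx.
rewrite !exprS IH -!mulmxE !mulmxA; congr (_ *m _).
by rewrite -[invmx T *m A *m T *m invmx T](mulmxA) mulmxV // mulmx1.
Qed.

Lemma quad_bound (R : realType) (n : nat) (H : 'M[R]_n) (v : 'cV[R]_n) :
  (v^T *m H *m v) 0 0 <= (\sum_i \sum_j `|H i j|) * sq v.
Proof.
rewrite mxE; under eq_bigr => j _ do rewrite mxE big_distrl /=.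
rewrite exchange_big /= mulr_suml; apply: ler_sum => i _.
rewrite mulr_suml; apply: ler_sum => j _; rewrite mxE.
have hi := sq_entry v i; have hj := sq_entry v j.
have hxy : `|v i 0 * v j 0| <= sq v.
  rewrite ler_norml; move: (v i 0) (v j 0) hi hj => a b ha hb.
  apply/andP; split; nra.
have : v i 0 * H i j * v j 0 <= `|H i j| * `|v i 0 * v j 0|.
  rewrite -normrM (_ : v i 0 * H i j * v j 0 = H i j * (v i 0 * v j 0)); [exact: ler_norm | ring].
move/le_trans; apply; apply: ler_wpM2l => //; exact: normr_ge0.
Qed.

Lemma psd_cs (R : realType) (n : nat) (G : 'M[R]_n) (x y : 'cV[R]_n) :
  G^T = G -> (forall z : 'cV[R]_n, 0 <= (z^T *m G *m z) 0 0) ->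
  ((x^T *m G *m y) 0 0) ^+ 2 <= (x^T *m G *m x) 0 0 * (y^T *m G *m y) 0 0.
Proof.
move=> hS hP.
have sym : (y^T *m G *m x) 0 0 = (x^T *m G *m y) 0 0.
  transitivity (((y^T *m G *m x)^T) 0 0); first by rewrite [RHS]mxE.
  by rewrite !trmx_mul trmxK hS mulmxA.
set a := (x^T *m G *m x) 0 0; set b := (x^T *m G *m y) 0 0.
set c := (y^T *m G *m y) 0 0.
have key t : 0 <= a + 2 * t * b + t ^+ 2 * c.
  have := hP (x + t *: y).
  rewrite !(linearD, linearZ) /= !mulmxDl -!scalemxAl.
  move: sym; rewrite /a /b /c.
  set X1 := x^T *m G *m x; set X2 := x^T *m G *m y; set X3 := y^T *m G *m x.
  set X4 := y^T *m G *m y => sym.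
  rewrite !mxE; rewrite /X3 /X2 !mxE in sym; rewrite sym.
  by move=> h; apply: le_trans h _; rewrite le_eqVlt; apply/orP; left; apply/eqP; ring.
have c0 : 0 <= c by exact: hP.
case: (ltrgtP c 0) => [|cpos|c0'].
- by rewrite ltNge c0.
- have := key (- b / c).
  have -> : a + 2 * (- b / c) * b + (- b / c) ^+ 2 * c = a - b ^+ 2 / c.
    by field; rewrite gt_eqF.
  rewrite subr_ge0 ler_pdivrMr //.
- rewrite c0' mulr0.
  case: (eqVneq b 0) => [->|bn0]; first by rewrite expr0n.
  have := key (- (a + 1) / (2 * b)).
  have -> : a + 2 * (- (a + 1) / (2 * b)) * b + (- (a + 1) / (2 * b)) ^+ 2 * c = -1.
    by rewrite c0' mulr0 addr0; field.
  by rewrite oppr_ge0 ler10.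
Qed.

Definition gram (R : realType) (n d : nat) (A : 'M[R]_n) (C : 'M[R]_(d, n)) : 'M[R]_n :=
  \sum_(k < n) (A ^+ k)^T *m C^T *m C *m A ^+ k.

Lemma gram_q (R : realType) (n d : nat) (A : 'M[R]_n) (C : 'M[R]_(d, n)) v :
  (v^T *m gram A C *m v) 0 0 = \sum_(k < n) sq (C *m (A ^+ k *m v)).
Proof.
rewrite /gram mulmx_sumr mulmx_suml summxE; apply: eq_bigr => k _.
by rewrite sqE !trmx_mul !mulmxA; reflexivity.
Qed.

Lemma gram_sym (R : realType) (n d : nat) (A : 'M[R]_n) (C : 'M[R]_(d, n)) :
  (gram A C)^T = gram A C.
Proof.
rewrite /gram raddf_sum; apply: eq_bigr => k _.
rewrite /= !trmx_mul !trmxK !mulmxA; reflexivity.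
Qed.

Lemma obs (R : realType) (n d : nat) (Hn : (0 < n)%N) (Hd : (0 < d)%N)
    (A : 'M[R]_n) (C : 'M[R]_(d, n)) :
  HOON A C -> HOON_unreduced A C -> forall v : 'cV[R]_n,
  (forall k, (k < n)%N -> C *m (A ^+ k *m v) = 0) -> v = 0.
Proof.
move=> [HA [HC HE]] [UA UC] v hv.
pose w k := A ^+ k *m v.
pose i0 : 'I_d := Ordinal Hd; pose j0 : 'I_n := Ordinal Hn.
have w0 k : (k < n)%N -> w k j0 0 = 0.
  move=> hk; have := congr1 (fun M : 'M[R]_(d,1) => M i0 0) (hv k hk); rewrite mxE /=.
  rewrite (bigD1 j0) //= big1 ?addr0 => [|m hm]; last first.
    rewrite HC ?mul0r //; rewrite lt0n; apply: contra hm => /eqP e.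
    by apply/eqP/val_inj; rewrite /= e.
  rewrite [X in _ = X]mxE; move/eqP; rewrite mulf_eq0 => /orP [/eqP h|/eqP //].
  by move: (UC i0 j0 erefl erefl); rewrite h eqxx.
have wT k : (k < n)%N -> A^T *m w k.+1 = w k.
  move=> hk; rewrite /w exprSmx mulmxA HE mulmxBl mul1mx -mulmxA.
  by rewrite (hv k hk) mulmx0 subr0.
have P : forall j, (j < n)%N -> forall k, (j <= k < n)%N ->
    forall i : 'I_n, (i <= j)%N -> w k i 0 = 0.
  elim=> [|j IH] hj k /andP[hjk hk] i hi.
  - have -> : i = j0 by apply: val_inj; move: hi; rewrite /= leqn0 => /eqP.
    exact: w0.
  - case: (ltnP j i) => hij; last first.
      by apply: IH => //; [apply: ltnW | rewrite hk andbT; apply: ltnW].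
    have ei : val i = j.+1 by apply/eqP; rewrite eqn_leq hi hij.
    have k0 : (0 < k)%N by apply: leq_trans hjk.
    have hk1 : (k.-1 < n)%N := leq_ltn_trans (leq_pred k) hk.
    have e := wT k.-1 hk1; rewrite prednK // in e.
    pose jj : 'I_n := Ordinal (ltnW hj).
    have : (A^T *m w k) jj 0 = 0.
      rewrite e; apply: IH; first exact: ltnW hj; last by rewrite /= leqnn.
      by rewrite hk1 andbT -ltnS prednK.
    rewrite mxE (bigD1 i) // big1 ?addr0 => [|m /= hm]; last first.
      rewrite mxE; case: (ltnP j m) => hjm.
        rewrite HA ?mul0r //= ltn_neqAle hjm andbT.
        by apply: contra hm => /eqP em; apply/eqP/val_inj; rewrite /= ei em.
      have hjn : (j < n)%N := ltnW hj.
      have hjk' : (j <= k < n)%N by rewrite hk andbT ltnW.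
      by rewrite (IH hjn k hjk' m hjm) mulr0.
    rewrite /= addr0 mxE; move/eqP; rewrite mulf_eq0 => /orP [/eqP h|/eqP //].
    by move: (UA i jj ei); rewrite h eqxx.
have hn1 : (n.-1 < n)%N by rewrite prednK.
have wn : w n.-1 = 0.
  apply/matrixP => i j; rewrite (ord1 j) [RHS]mxE; apply: (P n.-1) => //.
    by rewrite leqnn hn1.
  by rewrite -ltnS prednK.
have down : forall m, (m <= n.-1)%N -> w (n.-1 - m)%N = 0.
  elim=> [|m IH] hm; first by rewrite subn0.
  have h1 : (n.-1 - m.+1 < n)%N by rewrite (leq_ltn_trans (leq_subr _ _)).
  rewrite -(wT _ h1).
  have -> : (n.-1 - m.+1).+1 = (n.-1 - m)%N by rewrite subnS prednK // subn_gt0.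
  by rewrite IH ?mulmx0 // ltnW.
by have := down n.-1 (leqnn _); rewrite subnn /w expr0mx.
Qed.

Lemma gram_psd (R : realType) (n d : nat) (A : 'M[R]_n) (C : 'M[R]_(d, n)) (v : 'cV[R]_n) :
  0 <= (v^T *m gram A C *m v) 0 0.
Proof. by rewrite gram_q; apply: sumr_ge0 => k _; exact: sq_ge0. Qed.

Lemma gram_unit (R : realType) (n d : nat) (Hn : (0 < n)%N) (Hd : (0 < d)%N)
    (A : 'M[R]_n) (C : 'M[R]_(d, n)) :
  HOON A C -> HOON_unreduced A C -> gram A C \in unitmx.
Proof.
move=> H U; rewrite unitmxE unitfE; apply/negP => /det0P [w wn0 wG].
have Gv : gram A C *m w^T = 0 by rewrite -[gram A C]gram_sym -trmx_mul wG trmx0.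
have q0 : (w^T^T *m gram A C *m w^T) 0 0 = 0 by rewrite -mulmxA Gv mulmx0 mxE.
move: q0; rewrite gram_q => /eqP; rewrite psumr_eq0 => [/allP hk|k _]; last exact: sq_ge0.
have v0 : w^T = 0.
  apply: (obs Hn Hd H U) => k hkn.
  apply: sq_eq0; apply/eqP; have := hk (Ordinal hkn) (mem_index_enum _); exact.
by move: wn0; rewrite -[w]trmxK v0 trmx0 eqxx.
Qed.

Lemma obs_bound (R : realType) (n d : nat) (A : 'M[R]_n) (C : 'M[R]_(d, n)) :
  gram A C \in unitmx -> forall v : 'cV[R]_n,
  sq v <= (\sum_i \sum_j `|invmx (gram A C) i j|) * (v^T *m gram A C *m v) 0 0.
Proof.
move=> GU v; set G := gram A C; set H := invmx G; set L := \sum_i _.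
have HS : H^T = H by rewrite /H trmx_inv gram_sym.
have L0 : 0 <= L by apply: sumr_ge0 => i _; apply: sumr_ge0 => j _.
have e1 : sq v = ((H *m v)^T *m G *m v) 0 0.
  by rewrite sqE trmx_mul HS -[v^T *m H *m G]mulmxA mulVmx // mulmx1.
have e2 : ((H *m v)^T *m G *m (H *m v)) 0 0 = (v^T *m H *m v) 0 0.
  by rewrite trmx_mul HS !mulmxA -[v^T *m H *m G]mulmxA mulVmx // mulmx1.
have cs := psd_cs (H *m v) v (gram_sym A C) (@gram_psd _ _ _ A C).
rewrite -e1 e2 in cs.
have qb := quad_bound H v.
have q0 := gram_psd A C v.
have s0 := sq_ge0 v.
rewrite -/G -/L in cs qb q0 *.
move: (sq v) (L) ((v^T *m G *m v) 0 0) ((v^T *m H *m v) 0 0) cs qb q0 s0 L0 => s l q h.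
move=> cs qb q0 s0 l0.
have : s ^+ 2 <= l * s * q by apply: le_trans cs _; apply: ler_wpM2r.
case: (ltrgtP s 0) => [|sp|->]; first by rewrite ltNge s0.
  by rewrite expr2 -mulrA [l * _]mulrC -mulrA ler_pM2l // mulrC.
by rewrite mulr_ge0.
Qed.

Lemma stab (R : realType) (n d : nat) (Hn : (0 < n)%N) (Hd : (0 < d)%N)
    (A : 'M[R]_n) (C : 'M[R]_(d, n)) :
  HOON A C -> HOON_unreduced A C -> forall (u : 'cV[R]_n) (e : R), 0 < e ->
  exists N, sq (A ^+ N *m u) <= e.
Proof.
move=> H U u e e0.
have GU := gram_unit Hn Hd H U.
set L := \sum_i \sum_j `|invmx (gram A C) i j|.
have L0 : 0 <= L by apply: sumr_ge0 => i _; apply: sumr_ge0 => j _.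
pose s N := sq (A ^+ N *m u).
have step N : s N <= L * (s N - s (N + n)%N).
  have E := HOON_iter H n (A ^+ N *m u); rewrite -gram_q in E.
  have e' : A ^+ n *m (A ^+ N *m u) = A ^+ (N + n) *m u.
    by rewrite mulmxA mulmxE -exprD addnC.
  rewrite e' in E.
  rewrite /s {2}E addrK; exact: obs_bound.
have mono N M : (N <= M)%N -> s M <= s N by move=> h; exact: HOON_mono H N M u h.
have sge N : 0 <= s N by exact: sq_ge0.
have tele M : M%:R * s (M * n)%N <= L * (s 0%N - s (M * n)%N).
  elim: M => [|M IH]; first by rewrite mul0r mul0n subrr mulr0.
  have h1 := step (M * n)%N.
  have h2 := mono (M * n)%N (M * n + n)%N (leq_addr _ _).
  have -> : (M.+1 * n = M * n + n)%N by rewrite mulSn addnC.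
  rewrite -natr1.
  have h3 : M%:R * s (M * n + n)%N <= M%:R * s (M * n)%N.
    by apply: ler_wpM2l => //; exact: ler0n.
  move: IH h1 h2 h3 (sge (M * n + n)%N) (sge (M * n)%N) (sge 0%N) L0.
  move: (s (M * n)%N) (s (M * n + n)%N) (s 0%N) (M%:R : R) (L) => a b c m l.
  move=> IH h1 h2 h3 b0 a0 c0 l0.
  rewrite mulrDl mul1r (_ : l * (c - b) = l * (c - a) + l * (a - b)); last by ring.
  apply: lerD; [exact: le_trans h3 IH | exact: le_trans h2 h1].
pose x := L * s 0%N / e.
have x0 : 0 <= x by rewrite /x divr_ge0 // ?mulr_ge0 // ltW.
have hx := archi_boundP x0.
exists (Num.bound x * n)%N; rewrite leNgt; apply/negP => hlt.
have t := tele (Num.bound x).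
have : x * e < (Num.bound x)%:R * s (Num.bound x * n)%N.
  apply: (@le_lt_trans _ _ (x * s (Num.bound x * n)%N)).
    by apply: ler_wpM2l => //; exact: ltW.
  by rewrite ltr_pM2r // (lt_trans e0 hlt).
have -> : x * e = L * s 0%N by rewrite /x mulfVK ?gt_eqF.
move: t (sge (Num.bound x * n)%N) L0; move: (s _) => y.
move: ((Num.bound x)%:R : R) => m t y0 l0 h; nra.
Qed.

Lemma mxEB (R : realType) m p (X Y : 'M[R]_(m, p)) i j : (X - Y) i j = X i j - Y i j.
Proof. by rewrite !mxE. Qed.
Lemma mxED (R : realType) m p (X Y : 'M[R]_(m, p)) i j : (X + Y) i j = X i j + Y i j.
Proof. by rewrite !mxE. Qed.

Lemma sum_single (R : realType) (n : nat) (f : 'I_n -> R) i :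
  (forall j, j != i -> f j = 0) -> \sum_j f j = f i.
Proof. by move=> h; rewrite (bigD1 i) //= big1 ?addr0 // => j /h. Qed.

Lemma le0_eps (R : realType) (z : R) : (forall e, 0 < e -> z <= e) -> z <= 0.
Proof.
move=> h; rewrite leNgt; apply/negP => zp.
have := h (z / 2%:R) (divr_gt0 zp (ltr0n _ 2)); lra.
Qed.

Lemma form_entry (R : realType) (n : nat) (M : 'M[R]_n) i j :
  ((delta_mx i 0 : 'cV[R]_n)^T *m M *m (delta_mx j 0 : 'cV[R]_n)) 0 0 = M i j.
Proof. by rewrite trmx_delta -rowE -colE !mxE. Qed.

Lemma form_eq0 (R : realType) (n : nat) (M : 'M[R]_n) :
  (forall w : 'cV[R]_n, (w^T *m M *m w) 0 0 = 0) -> M^T = M -> M = 0.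
Proof.
move=> h hS; apply/matrixP => i j; rewrite [RHS]mxE.
have hii k : M k k = 0 by rewrite -form_entry h.
have e : M j i = M i j by have := congr1 (fun X : 'M[R]_n => X i j) hS; rewrite mxE.
have := h (delta_mx i 0 + delta_mx j 0 : 'cV[R]_n).
have tD : (delta_mx i 0 + delta_mx j 0 : 'cV[R]_n)^T =
    (delta_mx i 0 : 'cV[R]_n)^T + (delta_mx j 0 : 'cV[R]_n)^T.
  by apply/matrixP => a b; rewrite !mxE.
rewrite tD mulmxDl mulmxDl !mulmxDr !mxED !form_entry !hii e.
lra.
Qed.

Lemma sq1_pos (R : realType) (x : R) : 0 < x -> x * x = 1 -> x = 1.
Proof.
move=> x0 h; have : (x - 1) * (x + 1) = 0 by rewrite mulrDr mulrBl h; ring.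
move/eqP; rewrite mulf_eq0 => /orP [|]; first by rewrite subr_eq0 => /eqP.
by rewrite gt_eqF // ltr_wpDl // ltW.
Qed.

Unset Implicit Arguments.
Unset Strict Implicit.

Theorem corollary4p3 (R : realType) (n d : nat) (Hd : (1 <= d)%N) (Hdn : (d <= n)%N)
    (A : 'M[R]_n) (C : 'M[R]_(d, n)) (At : 'M[R]_n) (Ct : 'M[R]_(d, n)) :
  HOON A C -> HOON_strict A C -> HOON_nondegenerate A C ->
  HOON At Ct -> HOON_strict At Ct ->
  HOON_equiv A C At Ct ->
  At = A /\ Ct = C.
Proof.
move=> H [U S] ND Ht [Ut St] [T [TU [eAt eCt]]].
have Hn : (0 < n)%N := leq_trans Hd Hdn.
pose i0 : 'I_d := Ordinal Hd; pose j0 : 'I_n := Ordinal Hn.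
have key w : sq (T *m w) = sq w.
  have hC k : Ct *m (At ^+ k *m w) = C *m (A ^+ k *m (T *m w)).
    by rewrite eCt eAt conj_expr // !mulmxA -[C *m T *m invmx T]mulmxA mulmxV // mulmx1.
  have E N : sq w - sq (T *m w) = sq (At ^+ N *m w) - sq (A ^+ N *m (T *m w)).
    rewrite {1}(HOON_iter Ht N w) (HOON_iter H N (T *m w)).
    under eq_bigr => k _ do rewrite hC.
    lra.
  have b1 : sq w - sq (T *m w) <= 0.
    apply: le0_eps => e e0.
    have [N1 h1] := stab Hn Hd Ht Ut w e0.
    rewrite (E N1); have := sq_ge0 (A ^+ N1 *m (T *m w)); lra.
  have b2 : sq (T *m w) - sq w <= 0.
    apply: le0_eps => e e0.
    have [N2 h2] := stab Hn Hd H U (T *m w) e0.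
    have := E N2; have := sq_ge0 (At ^+ N2 *m w); lra.
  lra.
have TT : T^T *m T = 1%:M.
  apply/eqP; rewrite -subr_eq0; apply/eqP; apply: form_eq0.
    move=> w; rewrite mulmxBr mulmxBl mxEB mulmx1.
    have -> : (w^T *m (T^T *m T) *m w) 0 0 = sq (T *m w) by rewrite sqE trmx_mul !mulmxA.
    by rewrite key sqE subrr.
  by rewrite raddfB /= trmx_mul trmxK trmx1.
have TT' : T *m T^T = 1%:M := mulmx1C TT.
have entTT a b : \sum_i T i a * T i b = (a == b)%:R.
  have := congr1 (fun X : 'M[R]_n => X a b) TT; rewrite !mxE => <-.
  by apply: eq_bigr => i _; rewrite mxE.
have entTT' a b : \sum_j T a j * T b j = (a == b)%:R.
  have := congr1 (fun X : 'M[R]_n => X a b) TT'; rewrite !mxE => <-.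
  by apply: eq_bigr => i _; rewrite mxE.
have CT j : Ct i0 j = C i0 j0 * T j0 j.
  rewrite eCt mxE (sum_single (i:=j0)) // => m hm.
  rewrite (H.2.1 i0 m) ?mul0r // lt0n; apply: contra hm => /eqP e.
  by apply/eqP/val_inj; rewrite /= e.
have c0 : 0 < C i0 j0.
  by have /andP[h _] := S.2 i0 j0 erefl erefl; rewrite lt_def h andbT U.2.
have ct0 : 0 < Ct i0 j0.
  by have /andP[h _] := St.2 i0 j0 erefl erefl; rewrite lt_def h andbT Ut.2.
have rowT j : j != j0 -> T j0 j = 0.
  move=> hj; have : Ct i0 j = 0.
    apply: (Ht.2.1 i0 j) => //; rewrite lt0n; apply: contra hj => /eqP e.
    by apply/eqP/val_inj; rewrite /= e.
  by rewrite CT => /eqP; rewrite mulf_eq0 gt_eqF //= => /eqP.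
have T00pos : 0 < T j0 j0 by move: ct0; rewrite CT pmulr_rgt0.
have T00 : T j0 j0 = 1.
  apply: sq1_pos => //; have := entTT' j0 j0; rewrite eqxx => eS; rewrite -[RHS](_ : true%:R = 1) // -eS.
  by rewrite (sum_single (i:=j0)) // => j hj; rewrite rowT // mul0r.
have col0 i : T i j0 = (i == j0)%:R.
  rewrite eq_sym -(entTT' j0 i) (sum_single (i:=j0)) ?T00 ?mul1r // => j hj.
  by rewrite rowT // mul0r.
have AT : A *m T = T *m At by rewrite eAt !mulmxA mulmxV // mul1mx.
have Q : forall k, (k < n)%N -> forall i j : 'I_n, (j <= k)%N -> T i j = (i == j)%:R.
  elim=> [|k IH] hk i j hj.
    have -> : j = j0 by apply: val_inj; move: hj; rewrite /= leqn0 => /eqP.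
    exact: col0.
  have IH' := IH (ltnW hk).
  case: (ltnP k j) => hkj; last exact: IH' i j hkj.
  have ej : val j = k.+1 by apply/eqP; rewrite eqn_leq hj hkj.
  pose jk : 'I_n := Ordinal (ltnW hk).
  have rel (i' : 'I_n) : (k < i')%N -> A i' jk = T i' j * At j jk.
    move=> hi'.
    have := congr1 (fun X : 'M[R]_n => X i' jk) AT; rewrite !mxE.
    rewrite (sum_single (i:=jk)) => [|m hm]; last first.
      by rewrite (IH' m jk) ?leqnn // (negbTE hm) mulr0.
    rewrite (IH' jk jk) // eqxx mulr1.
    rewrite (sum_single (i:=j)) => [-> //|m hm].
    case: (ltnP k m) => hkm.
      rewrite (Ht.1 m jk) ?mulr0 //= ltn_neqAle hkm andbT.
      by apply: contra hm => /eqP e; apply/eqP/val_inj; rewrite /= ej e.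
    rewrite (IH' i' m hkm) (_ : (i' == m) = false) ?mul0r //.
    by apply/negbTE; rewrite neq_ltn (leq_ltn_trans hkm hi') orbT.
  have low (i' : 'I_n) : (i' <= k)%N -> T i' j = 0.
    move=> hi'; have := entTT i' j.
    rewrite (sum_single (i:=i')) => [|m hm]; last by rewrite (IH' m i') // (negbTE hm) mul0r.
    rewrite (IH' i' i') // eqxx mul1r => ->.
    by rewrite (_ : (i' == j) = false) //; apply/negbTE; rewrite neq_ltn ej ltnS hi'.
  have Atpos : 0 < At j jk by rewrite lt_def St.1 // Ut.1.
  have high (i' : 'I_n) : (k.+1 < i')%N -> T i' j = 0.
    move=> hi'; have := rel i' (ltnW hi').
    rewrite (H.1 i' jk) //= => /eqP; rewrite eq_sym mulf_eq0 (gt_eqF Atpos) orbF.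
    by move/eqP.
  have diag : T j j = 1.
    apply: sq1_pos.
      have := rel j; rewrite ej => /(_ (ltnSn _)) eA.
      by rewrite -(pmulr_lgt0 _ Atpos) -eA lt_def U.1 // S.1.
    have := entTT j j; rewrite eqxx => eS; rewrite -[RHS](_ : true%:R = 1) // -eS.
    rewrite (sum_single (i:=j)) // => m hm.
    case: (ltnP k m) => hkm.
      rewrite high ?mul0r // ltn_neqAle hkm andbT.
      by apply: contra hm => /eqP e; apply/eqP/val_inj; rewrite /= ej e.
    by rewrite low ?mul0r.
  case: (ltnP k i) => hki.
    case: (eqVneq i j) => [->|hij]; first by rewrite diag.
    rewrite high // ltn_neqAle hki andbT.
    by apply: contra hij => /eqP e; apply/eqP/val_inj; rewrite /= ej e.
  rewrite low // (_ : (i == j) = false) //; apply/negbTE.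
  by rewrite neq_ltn ej ltnS hki.
have T1 : T = 1%:M.
  apply/matrixP => i j; rewrite [RHS]mxE; apply: (Q n.-1).
    by rewrite prednK.
  by rewrite -ltnS prednK.
by rewrite eAt eCt T1 invmx1 mulmx1 mul1mx mulmx1.
Qed.
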